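(* Let $R$ be an $\omega$-algebraic lattice, and let $D,C$ be the inverse limits of $C_0=\{\bot\}$, $D_n=[C_n\to R]$, $C_{n+1}=D_n\times C_n$, so that $D\cong[C\to R]$ and $C\cong D\times C$. For each $A\in\{R,D,C\}$, the poset $(\mathcal F_A,\subseteq)$ of filters over $(\Lambda_A,\le_A)$ is isomorphic to $A$.
   Context: Domains. An $\omega$-algebraic lattice is a complete lattice in which every element is the join of the compact elements below it, and which has countably many compact elements. $\mathcal K(R)$ denotes the compact elements of $R$, $\bot$ is the bottom and $\sqcup$ is the join. Type languages: - $\Lambda_R$: $\rho::=\psi_a\mid\omega\mid\rho\wedge\rho$, with one constant $\psi_a$ for each $a\in\mathcal K(R)$. - $\Lambda_D$: $\delta::=\rho\mid\kappa\to\rho\mid\omega\mid\delta\wedge\delta$, with $\rho\in\Lambda_R$. - $\Lambda_C$: $\kappa::=\delta\times\kappa\mid\omega\mid\kappa\wedge\kappa$. An intersection type theory on such a language is a reflexive, transitive relation $\le$ satisfying $\sigma\wedge\tau\le\sigma$, $\sigma\wedge\tau\le\tau$, $\sigma\le\omega$, and, if $\rho\le\sigma$ and $\rho\le\tau$, then $\rho\le\sigma\wedge\tau$. We write $\sigma\sim\tau$ when $\sigma\le\tau\le\sigma$. The relations are defined as follows: - $\le_R$ is the least intersection type theory on $\Lambda_R$ with $\psi_\bot\sim_R\omega$ and $\psi_{a\sqcup b}\sim_R\psi_a\wedge\psi_b$. - $\le_D$ and $\le_C$ are the least intersection type theories on $\Lambda_D$ and $\Lambda_C$ closed under the following: - if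 $\rho_1\le_R\rho_2$ then $\rho_1\le_D\rho_2$; - $\omega\le_D\omega\to\omega$; - $\psi_a\le_D\omega\to\psi_a$ and $\omega\to\psi_a\le_D\psi_a$; - $\omega\le_C\omega\times\omega$; - $(\kappa\to\rho_1)\wedge(\kappa\to\rho_2)\le_D\kappa\to(\rho_1\wedge\rho_2)$; - $(\delta_1\times\kappa_1)\wedge(\delta_2\times\kappa_2)\le_C(\delta_1\wedge\delta_2)\times(\kappa_1\wedge\kappa_2)$; - if $\kappa_2\le_C\kappa_1$ and $\rho_1\le_R\rho_2$ then $\kappa_1\to\rho_1\le_D\kappa_2\to\rho_2$; - if $\delta_1\le_D\delta_2$ and $\kappa_1\le_C\kappa_2$ then $\delta_1\times\kappa_1\le_C\delta_2\times\kappa_2$. A filter over $(\Lambda_A,\le_A)$ is a set $f\subseteq\Lambda_A$ with $\omega\in f$, upward closed under $\le_A$, and closed under $\wedge$. $\mathcal F_A$ denotes the set of such filters. *)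

(* Defs.v *)
Definition is_ub {T : Type} (le : T -> T -> Prop) (S : T -> Prop) (x : T) : Prop :=
  forall y, S y -> le y x.

Definition is_lub {T : Type} (le : T -> T -> Prop) (S : T -> Prop) (x : T) : Prop :=
  is_ub le S x /\ forall z, is_ub le S z -> le x z.

(* least upper bound of S inside the subset W (the "carrier" of a sub-poset) *)
Definition is_lub_in {T : Type} (W : T -> Prop) (le : T -> T -> Prop)
    (S : T -> Prop) (x : T) : Prop :=
  W x /\ is_ub le S x /\ forall z, W z -> is_ub le S z -> le x z.

Definition directed {T : Type} (le : T -> T -> Prop) (S : T -> Prop) : Prop :=
  (exists x, S x) /\
  forall x y, S x -> S y -> exists z, S z /\ le x z /\ le y z.

Definition compact {T : Type} (le : T -> T -> Prop) (x : T) : Prop :=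
  forall S : T -> Prop, directed le S ->
  forall s, is_lub le S s -> le x s -> exists y, S y /\ le x y.

Definition omega_algebraic_lattice {T : Type} (le : T -> T -> Prop) : Prop :=
  (forall x, le x x) /\
  (forall x y z, le x y -> le y z -> le x z) /\
  (forall x y, le x y -> le y x -> x = y) /\
  (forall S : T -> Prop, exists x, is_lub le S x) /\
  (forall x, is_lub le (fun a => compact le a /\ le a x) x) /\
  (exists f : nat -> T, forall a, compact le a -> exists n, f n = a).

Definition Kel {T : Type} (le : T -> T -> Prop) : Type := {a : T | compact le a}.

Inductive tyR (K : Type) : Type :=
| psiR : K -> tyR K
| omR : tyR K
| meetR : tyR K -> tyR K -> tyR K.

Inductive tyD (K : Type) : Type :=
| rD : tyR K -> tyD K
| arrD : tyC K -> tyR K -> tyD K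
| omD : tyD K
| meetD : tyD K -> tyD K -> tyD K
with tyC (K : Type) : Type :=
| prodC : tyD K -> tyC K -> tyC K
| omC : tyC K
| meetC : tyC K -> tyC K -> tyC K.

Arguments psiR {K} _.
Arguments omR {K}.
Arguments meetR {K} _ _.
Arguments rD {K} _.
Arguments arrD {K} _ _.
Arguments omD {K}.
Arguments meetD {K} _ _.
Arguments prodC {K} _ _.
Arguments omC {K}.
Arguments meetC {K} _ _.

Inductive leR {T : Type} (le : T -> T -> Prop) : tyR (Kel le) -> tyR (Kel le) -> Prop :=
| leR_refl : forall s, leR le s s
| leR_trans : forall s t u, leR le s t -> leR le t u -> leR le s u
| leR_meet_l : forall s t, leR le (meetR s t) s
| leR_meet_r : forall s t, leR le (meetR s t) t
| leR_top : forall s, leR le s omR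
| leR_glb : forall r s t, leR le r s -> leR le r t -> leR le r (meetR s t)
| leR_bot1 : forall a : Kel le, is_lub le (fun _ => False) (proj1_sig a) ->
    leR le (psiR a) omR
| leR_bot2 : forall a : Kel le, is_lub le (fun _ => False) (proj1_sig a) ->
    leR le omR (psiR a)
| leR_join1 : forall a b c : Kel le,
    is_lub le (fun x => x = proj1_sig a \/ x = proj1_sig b) (proj1_sig c) ->
    leR le (psiR c) (meetR (psiR a) (psiR b))
| leR_join2 : forall a b c : Kel le,
    is_lub le (fun x => x = proj1_sig a \/ x = proj1_sig b) (proj1_sig c) ->
    leR le (meetR (psiR a) (psiR b)) (psiR c).

Inductive leD {T : Type} (le : T -> T -> Prop) : tyD (Kel le) -> tyD (Kel le) -> Prop :=
| leD_R : forall r1 r2, leR le r1 r2 -> leD le (rD r1) (rD r2)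
| leD_refl : forall s, leD le s s
| leD_trans : forall s t u, leD le s t -> leD le t u -> leD le s u
| leD_meet_l : forall s t, leD le (meetD s t) s
| leD_meet_r : forall s t, leD le (meetD s t) t
| leD_top : forall s, leD le s omD
| leD_glb : forall r s t, leD le r s -> leD le r t -> leD le r (meetD s t)
| leD_om_arr : leD le omD (arrD omC omR)
| leD_psi_arr : forall a, leD le (rD (psiR a)) (arrD omC (psiR a))
| leD_arr_psi : forall a, leD le (arrD omC (psiR a)) (rD (psiR a))
| leD_arr_meet : forall k r1 r2,
    leD le (meetD (arrD k r1) (arrD k r2)) (arrD k (meetR r1 r2))
| leD_arr : forall k1 k2 r1 r2, leC le k2 k1 -> leR le r1 r2 ->
    leD le (arrD k1 r1) (arrD k2 r2)
with leC {T : Type} (le : T -> T -> Prop) : tyC (Kel le) -> tyC (Kel le) -> Prop :=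
| leC_refl : forall s, leC le s s
| leC_trans : forall s t u, leC le s t -> leC le t u -> leC le s u
| leC_meet_l : forall s t, leC le (meetC s t) s
| leC_meet_r : forall s t, leC le (meetC s t) t
| leC_top : forall s, leC le s omC
| leC_glb : forall r s t, leC le r s -> leC le r t -> leC le r (meetC s t)
| leC_om_prod : leC le omC (prodC omD omC)
| leC_prod_meet : forall d1 d2 k1 k2,
    leC le (meetC (prodC d1 k1) (prodC d2 k2)) (prodC (meetD d1 d2) (meetC k1 k2))
| leC_prod : forall d1 d2 k1 k2, leD le d1 d2 -> leC le k1 k2 ->
    leC le (prodC d1 k1) (prodC d2 k2).

Definition is_filter {X : Type} (leX : X -> X -> Prop) (om : X) (meet : X -> X -> X)
    (f : X -> Prop) : Prop :=
  f om /\ (forall s t, f s -> leX s t -> f t) /\ (forall s t, f s -> f t -> f (meet s t)).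

Definition filterR {T : Type} (le : T -> T -> Prop) : Type :=
  {f : tyR (Kel le) -> Prop | is_filter (leR le) omR meetR f}.
Definition filterD {T : Type} (le : T -> T -> Prop) : Type :=
  {f : tyD (Kel le) -> Prop | is_filter (leD le) omD meetD f}.
Definition filterC {T : Type} (le : T -> T -> Prop) : Type :=
  {f : tyC (Kel le) -> Prop | is_filter (leC le) omC meetC f}.

Definition filter_incl {X : Type} {P : (X -> Prop) -> Prop} (f g : {h : X -> Prop | P h}) : Prop :=
  forall x, proj1_sig f x -> proj1_sig g x.

Fixpoint Craw (T : Type) (n : nat) : Type :=
  match n with
  | 0 => unit
  | S m => ((Craw T m -> T) * Craw T m)%type
  end.

Definition Draw (T : Type) (n : nat) : Type := Craw T n -> T.

Definition scott_cont {T X : Type} (le : T -> T -> Prop)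
    (leX : X -> X -> Prop) (W : X -> Prop) (f : X -> T) : Prop :=
  (forall x y, W x -> W y -> leX x y -> le (f x) (f y)) /\
  (forall S : X -> Prop, (forall x, S x -> W x) -> directed leX S ->
     forall x, is_lub_in W leX S x ->
     is_lub le (fun r => exists s, S s /\ r = f s) (f x)).

(* order and well-formedness (the genuine elements) of C_n:
   C_{n+1} = [C_n -> R] x C_n with componentwise order, [C_n -> R] being the
   Scott-continuous maps with the pointwise order *)
Fixpoint Cstr {T : Type} (le : T -> T -> Prop) (n : nat)
  : (Craw T n -> Craw T n -> Prop) * (Craw T n -> Prop) :=
  match n return ((Craw T n -> Craw T n -> Prop) * (Craw T n -> Prop)) with
  | 0 => (fun _ _ => True, fun _ => True)
  | S m =>
      let lem := fst (Cstr le m) in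
      let wfm := snd (Cstr le m) in
      (fun x y => (forall c, wfm c -> le (fst x c) (fst y c)) /\ lem (snd x) (snd y),
       fun x => scott_cont le lem wfm (fst x) /\ wfm (snd x))
  end.

Definition Cle {T : Type} (le : T -> T -> Prop) (n : nat) := fst (Cstr le n).
Definition Cwf {T : Type} (le : T -> T -> Prop) (n : nat) := snd (Cstr le n).

Definition Dwf {T : Type} (le : T -> T -> Prop) (n : nat) (f : Draw T n) : Prop :=
  scott_cont le (Cle le n) (Cwf le n) f.

Fixpoint ep {T : Type} (bot : T) (n : nat)
  : (Craw T n -> Craw T (S n)) * (Craw T (S n) -> Craw T n) :=
  match n return ((Craw T n -> Craw T (S n)) * (Craw T (S n) -> Craw T n)) with
  | 0 => (fun _ => ((fun _ => bot), tt), fun _ => tt)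
  | S m =>
      let e := fst (ep bot m) in
      let p := snd (ep bot m) in
      (fun x => ((fun c => fst x (p c)), e (snd x)),
       fun y => ((fun c => fst y (e c)), p (snd y)))
  end.

Definition emb {T : Type} (bot : T) (n : nat) := fst (ep bot n).
Definition prj {T : Type} (bot : T) (n : nat) := snd (ep bot n).

Definition Dlim {T : Type} (le : T -> T -> Prop) (bot : T) : Type :=
  {x : forall n, Draw T n |
    forall n, Dwf le n (x n) /\
      forall c, Cwf le n c -> x n c = x (S n) (emb bot n c)}.

Definition Dlim_le {T : Type} {le : T -> T -> Prop} {bot : T} (x y : Dlim le bot) : Prop :=
  forall n c, Cwf le n c -> le (proj1_sig x n c) (proj1_sig y n c).

(* C = inverse limit of the C_n along p_n (equality in C_n is the order kernel) *)
Definition Clim {T : Type} (le : T -> T -> Prop) (bot : T) : Type :=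
  {x : forall n, Craw T n |
    forall n, Cwf le n (x n) /\
      Cle le n (x n) (prj bot n (x (S n))) /\ Cle le n (prj bot n (x (S n))) (x n)}.

Definition Clim_le {T : Type} {le : T -> T -> Prop} {bot : T} (x y : Clim le bot) : Prop :=
  forall n, Cle le n (proj1_sig x n) (proj1_sig y n).

(* f is an order embedding whose image meets every equivalence class: for
   partial orders this is exactly an order isomorphism; for the limits above,
   whose raw representatives may carry junk off the genuine elements, it is an
   isomorphism of the underlying posets (quotient by the order kernel). *)
Definition order_iso {A B : Type} (leA : A -> A -> Prop) (leB : B -> B -> Prop) : Prop :=
  exists (f : A -> B) (g : B -> A),
    (forall x y, leA x y <-> leB (f x) (f y)) /\
    (forall y, leB (f (g y)) y /\ leB y (f (g y))).

(* Main.v *)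
Require Import Defs.
From Stdlib Require Import Classical ClassicalEpsilon Lia PeanoNat FunctionalExtensionality.

Section Main.
Context (T : Type) (le : T -> T -> Prop) (bot : T)
  (HR : omega_algebraic_lattice le) (Hbot : forall x, le bot x).

Lemma le_refl : forall x, le x x.
Proof. destruct HR as [H _]; exact H. Qed.
Lemma le_trans : forall x y z, le x y -> le y z -> le x z.
Proof. destruct HR as [_ [H _]]; exact H. Qed.
Lemma le_antisym : forall x y, le x y -> le y x -> x = y.
Proof. destruct HR as [_ [_ [H _]]]; exact H. Qed.
Lemma lub_ex : forall S : T -> Prop, exists x, is_lub le S x.
Proof. destruct HR as [_ [_ [_ [H _]]]]; exact H. Qed.
Lemma alg : forall x, is_lub le (fun a => compact le a /\ le a x) x.
Proof. destruct HR as [_ [_ [_ [_ [H _]]]]]; exact H. Qed.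

Definition supT (S : T -> Prop) : T :=
  proj1_sig (constructive_indefinite_description _ (lub_ex S)).
Lemma supT_spec S : is_lub le S (supT S).
Proof. unfold supT. destruct (constructive_indefinite_description _ _); auto. Qed.
Lemma supT_ub S x : S x -> le x (supT S).
Proof. intro H. apply (proj1 (supT_spec S)); auto. Qed.
Lemma supT_least S z : (forall x, S x -> le x z) -> le (supT S) z.
Proof. intro H. apply (proj2 (supT_spec S)); auto. Qed.
Lemma supT_ext (S S' : T -> Prop) : (forall x, S x <-> S' x) -> supT S = supT S'.
Proof.
  intro H. apply le_antisym; apply supT_least; intros x Hx; apply supT_ub; apply H; auto.
Qed.
Lemma supT_mono (S S' : T -> Prop) : (forall x, S x -> exists y, S' y /\ le x y) ->
  le (supT S) (supT S').
Proof.
  intro H. apply supT_least. intros x Hx. destruct (H x Hx) as [y [Hy Hxy]].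
  eapply le_trans; [exact Hxy| apply supT_ub; auto].
Qed.

Definition joinT (a b : T) : T := supT (fun x => x = a \/ x = b).
Lemma joinT_l a b : le a (joinT a b). Proof. apply supT_ub; auto. Qed.
Lemma joinT_r a b : le b (joinT a b). Proof. apply supT_ub; auto. Qed.
Lemma joinT_least a b z : le a z -> le b z -> le (joinT a b) z.
Proof. intros. apply supT_least. intros x [-> | ->]; auto. Qed.
Lemma joinT_lub a b : is_lub le (fun x => x = a \/ x = b) (joinT a b).
Proof. apply supT_spec. Qed.
Lemma joinT_mono a b a' b' : le a a' -> le b b' -> le (joinT a b) (joinT a' b').
Proof.
  intros. apply joinT_least; eapply le_trans; eauto using joinT_l, joinT_r.
Qed.

Lemma compact_sup a S : compact le a -> directed le S -> le a (supT S) ->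
  exists y, S y /\ le a y.
Proof. intros Ha Hd H. eapply Ha; eauto. apply supT_spec. Qed.

Lemma bot_compact : compact le bot.
Proof.
  intros S [[y Hy] _] s _ _. exists y; split; auto.
Qed.

Lemma join_compact a b : compact le a -> compact le b -> compact le (joinT a b).
Proof.
  intros Ha Hb S Hd s Hs Hle.
  assert (H1 : le a s) by (eapply le_trans; [apply joinT_l|exact Hle]).
  assert (H2 : le b s) by (eapply le_trans; [apply joinT_r|exact Hle]).
  destruct (Ha S Hd s Hs H1) as [y1 [Sy1 Hy1]].
  destruct (Hb S Hd s Hs H2) as [y2 [Sy2 Hy2]].
  destruct Hd as [_ Hd]. destruct (Hd y1 y2 Sy1 Sy2) as [z [Sz [Hz1 Hz2]]].
  exists z; split; auto. apply joinT_least; eapply le_trans; eauto.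
Qed.

Lemma step_compact a (P : Prop) : compact le a ->
  compact le (supT (fun y => y = a /\ P)).
Proof.
  intro Ha. destruct (classic P) as [HP|HP].
  - replace (supT (fun y => y = a /\ P)) with a; auto.
    apply le_antisym. apply supT_ub; auto. apply supT_least. intros x [-> _]; apply le_refl.
  - replace (supT (fun y => y = a /\ P)) with bot; [apply bot_compact|].
    apply le_antisym; auto. apply supT_least. intros x [_ H]; tauto.
Qed.

Lemma step_ge a (P : Prop) : P -> le a (supT (fun y => y = a /\ P)).
Proof. intro. apply supT_ub; auto. Qed.
Lemma step_le a (P : Prop) z : (P -> le a z) -> le (supT (fun y => y = a /\ P)) z.
Proof. intro H. apply supT_least. intros x [-> HP]; auto. Qed.

Lemma image_directed {X} (leX : X -> X -> Prop) (W : X -> Prop) (f : X -> T) (S : X -> Prop) :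
  (forall x y, W x -> W y -> leX x y -> le (f x) (f y)) ->
  (forall x, S x -> W x) -> directed leX S ->
  directed le (fun r => exists s, S s /\ r = f s).
Proof.
  intros Hm HW [[x0 Hx0] Hd]. split.
  - exists (f x0); eauto.
  - intros a b [s1 [S1 ->]] [s2 [S2 ->]].
    destruct (Hd s1 s2 S1 S2) as [z [Sz [H1 H2]]].
    exists (f z); split; [eauto|split; apply Hm; auto].
Qed.

Lemma const_cont {X} (leX : X -> X -> Prop) (W : X -> Prop) (a : T) :
  scott_cont le leX W (fun _ => a).
Proof.
  split.
  - intros; apply le_refl.
  - intros S HW [[s0 Hs0] _] x _. split.
    + intros y [s [_ ->]]. apply le_refl.
    + intros z Hz. apply Hz. eauto.
Qed.

Lemma sup_cont {X} (leX : X -> X -> Prop) (W : X -> Prop) (Fam : (X -> T) -> Prop) :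
  (forall f, Fam f -> scott_cont le leX W f) ->
  scott_cont le leX W (fun x => supT (fun y => exists f, Fam f /\ y = f x)).
Proof.
  intro HF. split.
  - intros x y Wx Wy Hxy. apply supT_mono. intros r [f [Ff ->]].
    exists (f y). split; eauto. apply (proj1 (HF f Ff)); auto.
  - intros S HW Hd x Hx. destruct Hx as [Wx [Hub Hl]]. split.
    + intros r [s [Ss ->]]. apply supT_mono. intros r [f [Ff ->]].
      exists (f x); split; eauto. apply (proj1 (HF f Ff)); auto.
    + intros z Hz. apply supT_least. intros r [f [Ff ->]].
      pose proof (proj2 (HF f Ff) S HW Hd x (conj Wx (conj Hub Hl))) as [_ H].
      apply H. intros r [s [Ss ->]].
      eapply le_trans; [|apply Hz; exists s; split; eauto].
      apply supT_ub. eauto.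
Qed.

Lemma join_cont {X} (leX : X -> X -> Prop) (W : X -> Prop) (f g : X -> T) :
  scott_cont le leX W f -> scott_cont le leX W g ->
  scott_cont le leX W (fun x => joinT (f x) (g x)).
Proof.
  intros [Hf Cf] [Hg Cg]. split.
  - intros. apply joinT_mono; auto.
  - intros S HW Hd x Hx. pose proof Hx as [Wx [Hub Hl]]. split.
    + intros r [s [Ss ->]]. apply joinT_mono; auto.
    + intros z Hz. apply joinT_least.
      * apply (proj2 (Cf S HW Hd x Hx)). intros r [s [Ss ->]].
        eapply le_trans; [apply joinT_l|]. apply Hz; eauto.
      * apply (proj2 (Cg S HW Hd x Hx)). intros r [s [Ss ->]].
        eapply le_trans; [apply joinT_r|]. apply Hz; eauto.
Qed.

Notation K := (Kel le).

Fixpoint topR (r : tyR K) : T :=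
  match r with
  | psiR a => proj1_sig a
  | omR => bot
  | meetR r s => joinT (topR r) (topR s)
  end.

Lemma topR_compact r : compact le (topR r).
Proof.
  induction r; simpl.
  - destruct k; auto.
  - apply bot_compact.
  - apply join_compact; auto.
Qed.

Definition topK (r : tyR K) : K := exist _ (topR r) (topR_compact r).

Lemma bot_lub_empty : is_lub le (fun _ => False) bot.
Proof. split. intros y []. intros z _. auto. Qed.

Lemma lub_empty_le a : is_lub le (fun _ => False) a -> le a bot.
Proof. intros [_ H]. apply H. intros y []. Qed.

Lemma leR_sound r s : leR le r s -> le (topR s) (topR r).
Proof.
  induction 1; simpl.
  - apply le_refl.
  - eapply le_trans; eauto.
  - apply joinT_l.
  - apply joinT_r.
  - auto.
  - apply joinT_least; auto.
  - auto.
  - apply lub_empty_le; auto.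
  - apply joinT_least; apply H; auto.
  - apply H. intros y [-> | ->]; [apply joinT_l|apply joinT_r].
Qed.

Lemma psi_anti (a b : K) : le (proj1_sig a) (proj1_sig b) -> leR le (psiR b) (psiR a).
Proof.
  intro H. eapply leR_trans; [apply (leR_join1 le a b b)|apply leR_meet_l].
  split.
  - intros y [-> | ->]; auto. apply le_refl.
  - intros z Hz. apply Hz; auto.
Qed.

Lemma R1 r : leR le r (psiR (topK r)) /\ leR le (psiR (topK r)) r.
Proof.
  induction r as [a| |r1 [IH1 IH1'] r2 [IH2 IH2']].
  - split; apply psi_anti; simpl; apply le_refl.
  - split.
    + apply leR_bot2. simpl. apply bot_lub_empty.
    + apply leR_bot1. simpl. apply bot_lub_empty.
  - assert (Hl : is_lub le (fun x => x = proj1_sig (topK r1) \/ x = proj1_sig (topK r2))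
                   (proj1_sig (topK (meetR r1 r2)))) by (simpl; apply joinT_lub).
    split.
    + eapply leR_trans; [|apply (leR_join2 le _ _ _ Hl)].
      apply leR_glb; [eapply leR_trans; [apply leR_meet_l|auto]
                    |eapply leR_trans; [apply leR_meet_r|auto]].
    + eapply leR_trans; [apply (leR_join1 le _ _ _ Hl)|].
      apply leR_glb; [eapply leR_trans; [apply leR_meet_l|auto]
                    |eapply leR_trans; [apply leR_meet_r|auto]].
Qed.

Lemma leR_complete r s : le (topR s) (topR r) -> leR le r s.
Proof.
  intro H. eapply leR_trans; [apply (proj1 (R1 r))|].
  eapply leR_trans; [|apply (proj2 (R1 s))]. apply psi_anti. exact H.
Qed.

Lemma abstract_iso {L X : Type} (leL : L -> L -> Prop) (om : L) (mt : L -> L -> L)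
  (leX : X -> X -> Prop) (sat : X -> L -> Prop) :
  (forall x, is_filter leL om mt (sat x)) ->
  (forall x y, leX x y <-> (forall s, sat x s -> sat y s)) ->
  (forall F, is_filter leL om mt F -> exists x, forall s, sat x s <-> F s) ->
  order_iso (@filter_incl _ _ : {f : L -> Prop | is_filter leL om mt f} -> _ -> Prop) leX.
Proof.
  intros Hf Hii Hiii.
  exists (fun F => proj1_sig (constructive_indefinite_description _ (Hiii _ (proj2_sig F)))).
  exists (fun x => exist _ (sat x) (Hf x)).
  split.
  - intros [F HF] [G HG]. unfold filter_incl; simpl.
    destruct (constructive_indefinite_description _ _) as [x Hx].
    destruct (constructive_indefinite_description _ _) as [y Hy]. simpl.
    rewrite Hii. split.
    + intros H s Hs. apply Hy, H, Hx, Hs.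
    + intros H s Hs. apply Hy, H, Hx, Hs.
  - intros y. simpl.
    destruct (constructive_indefinite_description _ _) as [x Hx]. simpl.
    split; apply Hii; intros s Hs; apply Hx; auto; apply Hx; auto.
Qed.

Definition satRR (x : T) (r : tyR K) : Prop := le (topR r) x.

Lemma R_iso : order_iso (@filter_incl _ _ : filterR le -> filterR le -> Prop) le.
Proof.
  apply (abstract_iso _ _ _ _ satRR).
  - intros x. unfold satRR, is_filter. split; [|split].
    + simpl; auto.
    + intros s t H Hst. eapply le_trans; [apply leR_sound; eauto|auto].
    + intros s t H1 H2. simpl. apply joinT_least; auto.
  - intros x y. unfold satRR. split.
    + intros H s Hs. eapply le_trans; eauto.
    + intros H. apply (proj2 (alg x)). intros a [Ha Hax].
      apply (H (psiR (exist _ a Ha))). exact Hax.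
  - intros F HF. unfold is_filter in HF. destruct HF as [Fom [Fup Fmt]].
    exists (supT (fun y => exists r, F r /\ y = topR r)).
    intros s. unfold satRR. split.
    + intro H.
      assert (Hd : directed le (fun y => exists r, F r /\ y = topR r)).
      { split; [exists bot, omR; auto|].
        intros x y [r1 [F1 ->]] [r2 [F2 ->]].
        exists (topR (meetR r1 r2)); split; [exists (meetR r1 r2); auto|].
        split; [apply joinT_l|apply joinT_r]. }
      destruct (compact_sup _ _ (topR_compact s) Hd H) as [y [[r [Fr ->]] Hle]].
      eapply Fup; eauto. apply leR_complete; auto.
    + intro H. apply supT_ub; eauto.
Qed.

Notation CR := (Craw T).
Notation Cl := (Cle le).
Notation Cw := (Cwf le).
Notation e := (emb bot).
Notation p := (prj bot).

Lemma Cle_0 x y : Cl 0 x y = True. Proof. reflexivity. Qed.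
Lemma Cwf_0 x : Cw 0 x = True. Proof. reflexivity. Qed.
Lemma Cle_S n x y : Cl (S n) x y =
  ((forall c, Cw n c -> le (fst x c) (fst y c)) /\ Cl n (snd x) (snd y)).
Proof. reflexivity. Qed.
Lemma Cwf_S n x : Cw (S n) x = (scott_cont le (Cl n) (Cw n) (fst x) /\ Cw n (snd x)).
Proof. reflexivity. Qed.
Lemma emb_0 x : e 0 x = ((fun _ => bot), tt). Proof. reflexivity. Qed.
Lemma emb_S n x : e (S n) x = ((fun c => fst x (p n c)), e n (snd x)).
Proof. reflexivity. Qed.
Lemma prj_S n y : p (S n) y = ((fun c => fst y (e n c)), p n (snd y)).
Proof. reflexivity. Qed.

Lemma Cle_refl n c : Cl n c c.
Proof.
  revert c; induction n; intro c; [exact I|].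
  rewrite Cle_S; split; auto using le_refl.
Qed.
Lemma Cle_trans n x y z : Cl n x y -> Cl n y z -> Cl n x z.
Proof.
  revert x y z; induction n; intros x y z; [auto|].
  rewrite !Cle_S. intros [H1 H2] [H3 H4]; split; eauto.
  intros c Hc; eapply le_trans; eauto.
Qed.

Lemma cont_mono {X} (leX : X -> X -> Prop) W f x y :
  scott_cont le leX W f -> W x -> W y -> leX x y -> le (f x) (f y).
Proof. intros [H _]; auto. Qed.

Fixpoint supC (n : nat) : (CR n -> Prop) -> CR n :=
  match n return ((CR n -> Prop) -> CR n) with
  | 0 => fun _ => tt
  | S m => fun S => ((fun c => supT (fun y => exists s, S s /\ y = fst s c)),
                     supC m (fun c0 => exists s, S s /\ c0 = snd s))
  end.

Lemma supC_ub n S s : S s -> Cl n s (supC n S).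
Proof.
  revert S s; induction n; intros S s Hs; [exact I|].
  rewrite Cle_S; split.
  - intros c _. simpl. apply supT_ub; eauto.
  - simpl. apply IHn; eauto.
Qed.

Lemma supC_least n S z : (forall s, S s -> Cl n s z) -> Cl n (supC n S) z.
Proof.
  revert S z; induction n; intros S z H; [exact I|].
  rewrite Cle_S; split.
  - intros c Hc. simpl. apply supT_least. intros y [s [Ss ->]].
    specialize (H s Ss). rewrite Cle_S in H. apply H; auto.
  - simpl. apply IHn. intros c0 [s [Ss ->]]. specialize (H s Ss). rewrite Cle_S in H. apply H.
Qed.

Lemma supC_wf n S : (forall s, S s -> Cw n s) -> Cw n (supC n S).
Proof.
  revert S; induction n; intros S H; [exact I|].
  rewrite Cwf_S; split.
  - pose proof (sup_cont (Cl n) (Cw n) (fun f => exists s, S s /\ f = fst s)) as HC.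
    assert (Hc : scott_cont le (Cl n) (Cw n)
       (fun x => supT (fun y => exists f, (exists s, S s /\ f = fst s) /\ y = f x))).
    { apply HC. intros f [s [Ss ->]]. specialize (H s Ss). rewrite Cwf_S in H. apply H. }
    assert (Heq : fst (supC (Datatypes.S n) S) =
      (fun x => supT (fun y => exists f, (exists s, S s /\ f = fst s) /\ y = f x))).
    { apply functional_extensionality. intro x. simpl. apply supT_ext.
      intro y; split.
      + intros [s [Ss ->]]; eauto.
      + intros [f [[s [Ss ->]] ->]]; eauto. }
    rewrite Heq; exact Hc.
  - simpl. apply IHn. intros c0 [s [Ss ->]]. specialize (H s Ss). rewrite Cwf_S in H. apply H.
Qed.

Lemma supC_lub_in n S : (forall s, S s -> Cw n s) -> is_lub_in (Cw n) (Cl n) S (supC n S).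
Proof.
  intro H. split; [apply supC_wf; auto|split].
  - intros s Ss; apply supC_ub; auto.
  - intros z _ Hz. apply supC_least; auto.
Qed.

Lemma supC_mono n S S' : (forall s, S s -> exists s', S' s' /\ Cl n s s') ->
  Cl n (supC n S) (supC n S').
Proof.
  intro H. apply supC_least. intros s Ss. destruct (H s Ss) as [s' [S's Hs]].
  eapply Cle_trans; eauto. apply supC_ub; auto.
Qed.

Lemma lub_in_le_supC n S x : is_lub_in (Cw n) (Cl n) S x -> (forall s, S s -> Cw n s) ->
  Cl n x (supC n S).
Proof.
  intros [Wx [Hub Hl]] HS. apply Hl. apply supC_wf; auto.
  intros s Ss; apply supC_ub; auto.
Qed.

Lemma mono_directed {X Y} (leX : X -> X -> Prop) (leY : Y -> Y -> Prop) (W : X -> Prop)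
  (f : X -> Y) (S : X -> Prop) :
  (forall x y, W x -> W y -> leX x y -> leY (f x) (f y)) ->
  (forall x, S x -> W x) -> directed leX S ->
  directed leY (fun r => exists s, S s /\ r = f s).
Proof.
  intros Hm HW [[x0 Hx0] Hd]. split.
  - exists (f x0); eauto.
  - intros a b [s1 [S1 ->]] [s2 [S2 ->]].
    destruct (Hd s1 s2 S1 S2) as [z [Sz [H1 H2]]].
    exists (f z); split; [eauto|split; apply Hm; auto].
Qed.

Lemma comp_cont {m n} (g : CR m -> CR n) (f : CR n -> T) :
  scott_cont le (Cl n) (Cw n) f ->
  (forall x, Cw m x -> Cw n (g x)) ->
  (forall x y, Cw m x -> Cw m y -> Cl m x y -> Cl n (g x) (g y)) ->
  (forall S, (forall s, S s -> Cw m s) ->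
     Cl n (g (supC m S)) (supC n (fun r => exists s, S s /\ r = g s))) ->
  scott_cont le (Cl m) (Cw m) (fun x => f (g x)).
Proof.
  intros Hf HW HM HC. split.
  - intros x y Wx Wy Hxy. apply (cont_mono _ _ _ _ _ Hf); auto.
  - intros S HS Hd x Hx.
    assert (H : is_lub le (fun r => exists s', (exists s, S s /\ s' = g s) /\ r = f s') (f (g x))).
    { apply (proj2 Hf (fun r => exists s, S s /\ r = g s)).
      + intros r [s [Ss ->]]; auto.
      + apply (mono_directed (Cl m) _ (Cw m)); auto.
      + destruct Hx as [Wx [Hub Hl]]. split; [auto|split].
        * intros r [s [Ss ->]]. apply HM; auto.
        * intros z Wz Hz. apply Cle_trans with (g (supC m S)).
          -- apply HM; auto. apply supC_wf; auto.
             apply Hl; [apply supC_wf; auto|]. intros s Ss; apply supC_ub; auto.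
          -- eapply Cle_trans; [apply HC; auto|]. apply supC_least; auto. }
    destruct H as [H1 H2]. split.
    + intros r [s [Ss ->]]. apply H1. eauto.
    + intros z Hz. apply H2. intros r [s' [[s [Ss ->]] ->]]. apply Hz; eauto.
Qed.


Lemma snd_supC n Q : snd (supC (S n) Q) = supC n (fun c0 => exists s, Q s /\ c0 = snd s).
Proof. reflexivity. Qed.
Lemma fst_supC n Q c : fst (supC (S n) Q) c = supT (fun y => exists s, Q s /\ y = fst s c).
Proof. reflexivity. Qed.

Lemma ep_props n :
  (forall c, Cw (S n) c -> Cw n (p n c)) /\
  (forall c, Cw n c -> Cw (S n) (e n c)) /\
  (forall c c', Cw (S n) c -> Cw (S n) c' -> Cl (S n) c c' -> Cl n (p n c) (p n c')) /\
  (forall c c', Cw n c -> Cw n c' -> Cl n c c' -> Cl (S n) (e n c) (e n c')) /\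
  (forall Q, (forall s, Q s -> Cw (S n) s) ->
     Cl n (p n (supC (S n) Q)) (supC n (fun r => exists s, Q s /\ r = p n s))) /\
  (forall Q, (forall s, Q s -> Cw n s) ->
     Cl (S n) (e n (supC n Q)) (supC (S n) (fun r => exists s, Q s /\ r = e n s))).
Proof.
  induction n as [|n [PW [EW [PM [EM [PC EC]]]]]].
  - split; [intros; exact I|]. split.
    + intros c _. rewrite emb_0, Cwf_S. split; [apply const_cont|exact I].
    + split; [intros; exact I|]. split.
      * intros c c' _ _ _. rewrite !emb_0, Cle_S. split; [intros; apply le_refl|exact I].
      * split; [intros; exact I|].
        intros Q _. rewrite emb_0, Cle_S. split; [intros; apply Hbot|exact I].
  - split; [|split; [|split; [|split; [|split]]]].
    +
      intros c Hc. rewrite prj_S, Cwf_S. rewrite Cwf_S in Hc. destruct Hc as [Hf Hc0].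
      split; simpl; [|auto].
      apply (comp_cont (e n) (fst c)); auto.
    +
      intros c Hc. rewrite emb_S, Cwf_S. rewrite Cwf_S in Hc. destruct Hc as [Hf Hc0].
      split; simpl; [|auto].
      apply (comp_cont (p n) (fst c)); auto.
    +
      intros c c' Hc Hc' H. rewrite !prj_S, Cle_S. rewrite Cle_S in H. rewrite Cwf_S in Hc, Hc'.
      destruct H as [H1 H2]. split; simpl.
      * intros c1 Hc1. apply H1. auto.
      * apply PM; tauto.
    +
      intros c c' Hc Hc' H. rewrite !emb_S, Cle_S. rewrite Cle_S in H. rewrite Cwf_S in Hc, Hc'.
      destruct H as [H1 H2]. split; simpl.
      * intros c1 Hc1. apply H1. auto.
      * apply EM; tauto.
    +
      intros Q HQ. rewrite prj_S, Cle_S. split.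
      * intros c1 Hc1. simpl. apply supT_mono. intros y [s [Qs ->]].
        exists (fst (p (S n) s) c1). split; [|rewrite prj_S; apply le_refl].
        exists (p (S n) s). split; eauto.
      * rewrite !snd_supC. eapply Cle_trans; [apply PC|].
        { intros s [s0 [Qs0 ->]]. specialize (HQ s0 Qs0). rewrite Cwf_S in HQ. apply HQ. }
        apply supC_mono. intros r [s' [[s [Qs ->]] ->]].
        exists (snd (p (S n) s)). split; [|rewrite prj_S; apply Cle_refl].
        exists (p (S n) s); split; eauto.
    +
      intros Q HQ. rewrite emb_S, Cle_S. split.
      * intros c1 Hc1. simpl. apply supT_mono. intros y [s [Qs ->]].
        exists (fst (e (S n) s) c1). split; [|rewrite emb_S; apply le_refl].
        exists (e (S n) s). split; eauto.
      * cbn [snd]. rewrite (snd_supC n), (snd_supC (S n)). eapply Cle_trans; [apply EC|].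
        { intros s [s0 [Qs0 ->]]. specialize (HQ s0 Qs0). rewrite Cwf_S in HQ. apply HQ. }
        apply supC_mono. intros r [s' [[s [Qs ->]] ->]].
        exists (snd (e (S n) s)). split; [|rewrite emb_S; apply Cle_refl].
        exists (e (S n) s); split; eauto.
Qed.

Lemma PW n c : Cw (S n) c -> Cw n (p n c). Proof. apply ep_props. Qed.
Lemma EW n c : Cw n c -> Cw (S n) (e n c). Proof. apply ep_props. Qed.
Lemma PM n c c' : Cw (S n) c -> Cw (S n) c' -> Cl (S n) c c' -> Cl n (p n c) (p n c').
Proof. apply ep_props. Qed.
Lemma EM n c c' : Cw n c -> Cw n c' -> Cl n c c' -> Cl (S n) (e n c) (e n c').
Proof. apply ep_props. Qed.
Lemma PC n Q : (forall s, Q s -> Cw (S n) s) ->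
     Cl n (p n (supC (S n) Q)) (supC n (fun r => exists s, Q s /\ r = p n s)).
Proof. apply ep_props. Qed.

Lemma PE n c : Cw n c -> Cl n (p n (e n c)) c /\ Cl n c (p n (e n c)).
Proof.
  revert c; induction n as [|n IH]; intros c Hc; [split; exact I|].
  rewrite emb_S, prj_S, !Cle_S. rewrite Cwf_S in Hc. destruct Hc as [Hf Hc0].
  simpl. split; split.
  - intros c1 Hc1. apply (cont_mono _ _ _ _ _ Hf); auto. apply PW, EW; auto. apply IH; auto.
  - apply IH; auto.
  - intros c1 Hc1. apply (cont_mono _ _ _ _ _ Hf); auto. apply PW, EW; auto. apply IH; auto.
  - apply IH; auto.
Qed.

Lemma EP n c : Cw (S n) c -> Cl (S n) (e n (p n c)) c.
Proof.
  revert c; induction n as [|n IH]; intros c Hc.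
  - rewrite emb_0, Cle_S. split; [intros; apply Hbot|exact I].
  - rewrite prj_S, emb_S, Cle_S. rewrite Cwf_S in Hc. destruct Hc as [Hf Hc0].
    simpl. split.
    + intros c1 Hc1. apply (cont_mono _ _ _ _ _ Hf); auto. apply EW, PW; auto.
    + apply IH; auto.
Qed.

Fixpoint projD (k : tyC K) : tyD K :=
  match k with prodC d _ => d | omC => omD | meetC a b => meetD (projD a) (projD b) end.
Fixpoint projC (k : tyC K) : tyC K :=
  match k with prodC _ k' => k' | omC => omC | meetC a b => meetC (projC a) (projC b) end.

Fixpoint trivD (d : tyD K) : Prop :=
  match d with
  | rD r => le (topR r) bot
  | arrD _ r => le (topR r) bot
  | omD => True
  | meetD a b => trivD a /\ trivD b
  end.
Fixpoint trivC (k : tyC K) : Prop :=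
  match k with
  | prodC d k' => trivD d /\ trivC k'
  | omC => True
  | meetC a b => trivC a /\ trivC b
  end.

Fixpoint depthD (d : tyD K) : nat :=
  match d with
  | rD _ => 0
  | arrD k _ => depthC k
  | omD => 0
  | meetD a b => max (depthD a) (depthD b)
  end
with depthC (k : tyC K) : nat :=
  match k with
  | prodC d k' => S (max (depthD d) (depthC k'))
  | omC => 0
  | meetC a b => max (depthC a) (depthC b)
  end.

Fixpoint uD {n} (t : tyC K -> CR n) (ts : CR n -> tyC K -> Prop) (d : tyD K) : CR n -> T :=
  match d with
  | rD r => fun _ => topR r
  | arrD k r => fun c => supT (fun y => y = topR r /\ ts c k)
  | omD => fun _ => bot
  | meetD a b => fun c => joinT (uD t ts a c) (uD t ts b c)
  end.

Fixpoint tsD {n} (t : tyC K -> CR n) (f : CR n -> T) (d : tyD K) : Prop :=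
  match d with
  | rD r => le (topR r) (f (t omC))
  | arrD k r => le (topR r) (f (t k))
  | omD => True
  | meetD a b => tsD t f a /\ tsD t f b
  end.

Fixpoint lev (n : nat) : (tyC K -> CR n) * (CR n -> tyC K -> Prop) :=
  match n return ((tyC K -> CR n) * (CR n -> tyC K -> Prop)) with
  | 0 => (fun _ => tt, fun _ k => trivC k)
  | S m => ((fun k => (uD (fst (lev m)) (snd (lev m)) (projD k), fst (lev m) (projC k))),
            (fun c k => tsD (fst (lev m)) (fst c) (projD k) /\ snd (lev m) (snd c) (projC k)))
  end.

Definition tC n := fst (lev n).
Definition tsC n := snd (lev n).
Definition uDn n := uD (tC n) (tsC n).
Definition tsDn n := tsD (tC n).

Lemma tC_S n k : tC (S n) k = (uDn n (projD k), tC n (projC k)). Proof. reflexivity. Qed.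
Lemma tsC_S n c k : tsC (S n) c k = (tsDn n (fst c) (projD k) /\ tsC n (snd c) (projC k)).
Proof. reflexivity. Qed.
Lemma tsC_0 c k : tsC 0 c k = trivC k. Proof. reflexivity. Qed.
Lemma uDn_arr n k r c : uDn n (arrD k r) c = supT (fun y => y = topR r /\ tsC n c k).
Proof. reflexivity. Qed.
Lemma uDn_meet n a b c : uDn n (meetD a b) c = joinT (uDn n a c) (uDn n b c).
Proof. reflexivity. Qed.
Lemma uDn_rD n r c : uDn n (rD r) c = topR r. Proof. reflexivity. Qed.
Lemma uDn_om n c : uDn n omD c = bot. Proof. reflexivity. Qed.
Lemma tsDn_arr n f k r : tsDn n f (arrD k r) = le (topR r) (f (tC n k)). Proof. reflexivity. Qed.
Lemma tsDn_rD n f r : tsDn n f (rD r) = le (topR r) (f (tC n omC)). Proof. reflexivity. Qed.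
Lemma tsDn_meet n f a b : tsDn n f (meetD a b) = (tsDn n f a /\ tsDn n f b). Proof. reflexivity. Qed.
Lemma tsDn_om n f : tsDn n f omD = True. Proof. reflexivity. Qed.

Lemma tsC_om n c : tsC n c omC.
Proof.
  revert c; induction n; intro c; [rewrite tsC_0; exact I|].
  rewrite tsC_S. simpl. split; [exact I|auto].
Qed.

Lemma tsC_meet n c a b : tsC n c (meetC a b) <-> tsC n c a /\ tsC n c b.
Proof.
  revert c a b; induction n; intros c a b; [rewrite !tsC_0; simpl; tauto|].
  rewrite !tsC_S. simpl. rewrite IHn. unfold tsDn. simpl. tauto.
Qed.

Lemma tC_om_least n c : Cl n (tC n omC) c.
Proof.
  revert c; induction n; intro c; [exact I|].
  rewrite tC_S, Cle_S. simpl. split; [intros; apply Hbot|auto].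
Qed.

Lemma tC_meet_l n a b : Cl n (tC n a) (tC n (meetC a b)).
Proof.
  revert a b; induction n; intros a b; [exact I|].
  rewrite !tC_S, Cle_S. simpl. split; [intros; rewrite uDn_meet; apply joinT_l|auto].
Qed.
Lemma tC_meet_r n a b : Cl n (tC n b) (tC n (meetC a b)).
Proof.
  revert a b; induction n; intros a b; [exact I|].
  rewrite !tC_S, Cle_S. simpl. split; [intros; rewrite uDn_meet; apply joinT_r|auto].
Qed.
Lemma tC_meet_least n a b z : Cl n (tC n a) z -> Cl n (tC n b) z -> Cl n (tC n (meetC a b)) z.
Proof.
  revert a b z; induction n; intros a b z; [auto|].
  rewrite !tC_S, !Cle_S. simpl. intros [H1 H2] [H3 H4]. split; [|auto].
  intros c Hc; rewrite uDn_meet; apply joinT_least; auto.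
Qed.

Lemma step_cont n (P : CR n -> Prop) a :
  (forall c c', Cw n c -> Cw n c' -> Cl n c c' -> P c -> P c') ->
  (forall Q, (forall s, Q s -> Cw n s) -> directed (Cl n) Q -> P (supC n Q) ->
     exists s, Q s /\ P s) ->
  scott_cont le (Cl n) (Cw n) (fun c => supT (fun y => y = a /\ P c)).
Proof.
  intros Hm Ho. split.
  - intros x y Wx Wy Hxy. apply step_le. intro. apply step_ge. eauto.
  - intros Q HQ Hd x Hx. split.
    + intros r [s [Qs ->]]. apply step_le. intro. apply step_ge.
      destruct Hx as [Wx [Hub _]]. apply Hm with s; auto.
    + intros z Hz. apply step_le. intro HP.
      assert (HP' : P (supC n Q)).
      { eapply Hm; [apply Hx|apply supC_wf; auto| |exact HP]. apply lub_in_le_supC; auto. }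
      destruct (Ho Q HQ Hd HP') as [s [Qs Ps]].
      eapply le_trans; [apply (step_ge a (P s) Ps)|]. apply Hz. eauto.
Qed.

Definition LV n :=
  (forall k, Cw n (tC n k)) /\
  (forall c c' k, Cw n c -> Cw n c' -> Cl n c c' -> tsC n c k -> tsC n c' k) /\
  (forall Q, (forall s, Q s -> Cw n s) -> directed (Cl n) Q ->
     forall k, tsC n (supC n Q) k -> exists s, Q s /\ tsC n s k).

Lemma tsD_mono n : LV n -> forall f f' d, (forall c, Cw n c -> le (f c) (f' c)) ->
  tsDn n f d -> tsDn n f' d.
Proof.
  intros [Hw _] f f' d H. induction d; simpl; unfold tsDn; simpl.
  - intro; eapply le_trans; eauto.
  - intro; eapply le_trans; eauto.
  - auto.
  - unfold tsDn in *; intros [H1 H2]; auto.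
Qed.

Lemma uD_wf n : LV n -> forall d, scott_cont le (Cl n) (Cw n) (uDn n d).
Proof.
  intros [Hw [Hm Ho]] d. induction d.
  - apply const_cont.
  - unfold uDn; simpl. apply step_cont.
    + intros c c' Hc Hc' H. apply Hm; auto.
    + intros Q HQ Hd HP. apply Ho; auto.
  - apply const_cont.
  - apply join_cont; auto.
Qed.

Lemma tsD_open n : LV n -> forall Q, (forall s, Q s -> Cw (S n) s) -> directed (Cl (S n)) Q ->
  forall d, tsDn n (fst (supC (S n) Q)) d -> exists s, Q s /\ tsDn n (fst s) d.
Proof.
  intros HL Q HQ Hd d. pose proof HL as [Hw _].
  assert (Hdir : forall c, Cw n c -> directed le (fun y => exists s, Q s /\ y = fst s c)).
  { intros c Hc.
    apply (image_directed (Cl (S n)) (Cw (S n)) (fun s => fst s c)); auto.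
    intros x y _ _ Hxy. rewrite Cle_S in Hxy. apply Hxy; auto. }
  induction d as [r|k r| |a IHa b IHb].
  - rewrite tsDn_rD, fst_supC. intro H.
    destruct (compact_sup _ _ (topR_compact r) (Hdir _ (Hw omC)) H) as [y [[s [Qs ->]] Hy]].
    exists s; split; auto.
  - rewrite tsDn_arr, fst_supC. intro H.
    destruct (compact_sup _ _ (topR_compact r) (Hdir _ (Hw k)) H) as [y [[s [Qs ->]] Hy]].
    exists s; split; auto.
  - intros _. destruct Hd as [[s Qs] _]. exists s; split; auto. exact I.
  - rewrite tsDn_meet. intros [Ha Hb]. destruct (IHa Ha) as [s1 [Q1 H1]].
    destruct (IHb Hb) as [s2 [Q2 H2]]. destruct Hd as [_ Hd].
    destruct (Hd s1 s2 Q1 Q2) as [s [Qs [Hs1 Hs2]]].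
    exists s; split; auto. rewrite tsDn_meet. split.
    + eapply tsD_mono; eauto. rewrite Cle_S in Hs1; apply Hs1.
    + eapply tsD_mono; eauto. rewrite Cle_S in Hs2; apply Hs2.
Qed.

Lemma LV_all n : LV n.
Proof.
  induction n as [|n IH].
  - split; [intros; exact I|split].
    + intros c c' k _ _ _ H. exact H.
    + intros Q _ [[s Qs] _] k. intro H; exists s; split; [exact Qs|exact H].
  - pose proof IH as [Hw [Hm Ho]]. split; [|split].
    + intros k. rewrite tC_S, Cwf_S. split; [apply uD_wf; auto|apply Hw].
    + intros c c' k Hc Hc' H. rewrite !tsC_S. rewrite Cle_S in H. rewrite Cwf_S in Hc, Hc'.
      intros [H1 H2]. split.
      * eapply tsD_mono; eauto. apply H.
      * eapply Hm; [| | apply H|]; tauto.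
    + intros Q HQ Hd k. rewrite tsC_S. intros [H1 H2].
      destruct (tsD_open n IH Q HQ Hd _ H1) as [s1 [Q1 Hs1]].
      rewrite snd_supC in H2.
      destruct (Ho (fun c0 => exists s, Q s /\ c0 = snd s)) with (k := projC k) as [c0 [[s2 [Q2 ->]] Hs2]]; auto.
      * intros c0 [s [Qs ->]]. specialize (HQ s Qs). rewrite Cwf_S in HQ; apply HQ.
      * apply (mono_directed (Cl (S n)) (Cl n) (Cw (S n)) snd); auto.
        intros x y _ _ Hxy. rewrite Cle_S in Hxy; apply Hxy.
      * destruct Hd as [_ Hd]. destruct (Hd s1 s2 Q1 Q2) as [s [Qs [Hl1 Hl2]]].
        exists s; split; auto. rewrite tsC_S. split.
        -- eapply tsD_mono; eauto. rewrite Cle_S in Hl1; apply Hl1.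
        -- pose proof (HQ s2 Q2) as W2. pose proof (HQ s Qs) as W. rewrite Cwf_S in W2, W.
           eapply Hm; [| | |exact Hs2]; try tauto. rewrite Cle_S in Hl2; apply Hl2.
Qed.

Lemma tC_wf n k : Cw n (tC n k). Proof. apply LV_all. Qed.
Lemma tsC_mono n c c' k : Cw n c -> Cw n c' -> Cl n c c' -> tsC n c k -> tsC n c' k.
Proof. apply LV_all. Qed.
Lemma tsC_open n Q : (forall s, Q s -> Cw n s) -> directed (Cl n) Q ->
  forall k, tsC n (supC n Q) k -> exists s, Q s /\ tsC n s k.
Proof. apply LV_all. Qed.
Lemma uDn_wf n d : scott_cont le (Cl n) (Cw n) (uDn n d).
Proof. apply uD_wf, LV_all. Qed.
Lemma tsDn_mono n f f' d : (forall c, Cw n c -> le (f c) (f' c)) -> tsDn n f d -> tsDn n f' d.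
Proof. apply tsD_mono, LV_all. Qed.

Lemma trivD_tsD n (t : tyC K -> CR n) d : tsD t (fun _ => bot) d <-> trivD d.
Proof. induction d; simpl; tauto. Qed.

Lemma trivC_proj k : trivC k <-> trivD (projD k) /\ trivC (projC k).
Proof. induction k; simpl; tauto. Qed.

Lemma uD_from_ts n : (forall c k, Cw n c -> (tsC (S n) (e n c) k <-> tsC n c k)) ->
  forall c d, Cw n c -> uDn (S n) d (e n c) = uDn n d c.
Proof.
  intros H c d Hc. induction d.
  - reflexivity.
  - rewrite !uDn_arr. apply supT_ext. intro y. rewrite H; tauto.
  - reflexivity.
  - rewrite !uDn_meet. congruence.
Qed.

Lemma tsD_comp n (f : CR n -> T) : scott_cont le (Cl n) (Cw n) f ->
  (forall k, Cl n (p n (tC (S n) k)) (tC n k) /\ Cl n (tC n k) (p n (tC (S n) k))) ->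
  forall d, tsDn (S n) (fun c => f (p n c)) d <-> tsDn n f d.
Proof.
  intros Hf HL.
  assert (Heq : forall k, f (p n (tC (S n) k)) = f (tC n k)).
  { intro k. apply le_antisym; apply (cont_mono _ _ _ _ _ Hf);
      try apply PW; try apply tC_wf; apply HL. }
  induction d.
  - rewrite !tsDn_rD. rewrite Heq. tauto.
  - rewrite !tsDn_arr. rewrite Heq. tauto.
  - rewrite !tsDn_om; tauto.
  - rewrite !tsDn_meet; tauto.
Qed.

Lemma emb_inv n :
  (forall c k, Cw n c -> (tsC (S n) (e n c) k <-> tsC n c k)) /\
  (forall k, Cl n (p n (tC (S n) k)) (tC n k) /\ Cl n (tC n k) (p n (tC (S n) k))).
Proof.
  induction n as [|n [IHC IHL]].
  - split; [|split; exact I].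
    intros c k _. rewrite emb_0, tsC_S. cbn [fst snd]. rewrite tsC_0, tsC_0.
    unfold tsDn. rewrite trivD_tsD. rewrite (trivC_proj k). tauto.
  - split.
    + intros c k Hc. rewrite emb_S, (tsC_S (S n)), (tsC_S n c). cbn [fst snd]. rewrite Cwf_S in Hc.
      rewrite IHC by apply Hc. rewrite tsD_comp; [tauto|apply Hc|auto].
    + intros k. rewrite prj_S, !tC_S, !Cle_S. cbn [fst snd].
      pose proof (uD_from_ts n IHC) as HD.
      split; split; try (intros c Hc; rewrite HD; auto; apply le_refl); apply IHL.
Qed.

Lemma tsC_emb n c k : Cw n c -> (tsC (S n) (e n c) k <-> tsC n c k).
Proof. apply emb_inv. Qed.
Lemma uDn_emb n c d : Cw n c -> uDn (S n) d (e n c) = uDn n d c.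
Proof. apply uD_from_ts, emb_inv. Qed.
Lemma prj_tC n k : Cl n (p n (tC (S n) k)) (tC n k) /\ Cl n (tC n k) (p n (tC (S n) k)).
Proof. apply emb_inv. Qed.

Lemma below_D n : (forall c k, Cw n c -> tsC n c k -> Cl n (tC n k) c) ->
  forall f d, scott_cont le (Cl n) (Cw n) f -> tsDn n f d ->
  forall c, Cw n c -> le (uDn n d c) (f c).
Proof.
  intros HC f d Hf. induction d; intros H c Hc.
  - rewrite uDn_rD. rewrite tsDn_rD in H. eapply le_trans; [exact H|].
    apply (cont_mono _ _ _ _ _ Hf); auto. apply tC_wf. apply tC_om_least.
  - rewrite uDn_arr. rewrite tsDn_arr in H. apply step_le. intro Hk.
    eapply le_trans; [exact H|]. apply (cont_mono _ _ _ _ _ Hf); auto. apply tC_wf.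
  - apply Hbot.
  - rewrite uDn_meet. rewrite tsDn_meet in H. destruct H.
    apply joinT_least; [apply IHd1|apply IHd2]; auto.
Qed.

Lemma below_C n c k : Cw n c -> tsC n c k -> Cl n (tC n k) c.
Proof.
  revert c k; induction n; intros c k Hc H; [exact I|].
  rewrite tC_S, Cle_S. rewrite tsC_S in H. rewrite Cwf_S in Hc. cbn [fst snd]. split.
  - intros c1 Hc1. eapply below_D; eauto; tauto.
  - apply IHn; tauto.
Qed.

Lemma below_Dn n f d : scott_cont le (Cl n) (Cw n) f -> tsDn n f d ->
  forall c, Cw n c -> le (uDn n d c) (f c).
Proof. apply below_D. intros; apply below_C; auto. Qed.

Lemma depth_proj k n : depthC k <= S n -> depthD (projD k) <= n /\ depthC (projC k) <= n.
Proof.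
  induction k; simpl; intros H; [lia|lia|].
  destruct IHk1 as [A1 B1]; [lia|]. destruct IHk2 as [A2 B2]; [lia|]. lia.
Qed.

Lemma depth0_triv k : depthC k <= 0 -> trivC k.
Proof. induction k; simpl; intros; try lia; auto. split; [apply IHk1|apply IHk2]; lia. Qed.

Lemma self_sat n : (forall k, depthC k <= n -> tsC n (tC n k) k) /\
  (forall d, depthD d <= n -> tsDn n (uDn n d) d).
Proof.
  assert (HD : forall n, (forall k, depthC k <= n -> tsC n (tC n k) k) ->
                 forall d, depthD d <= n -> tsDn n (uDn n d) d).
  { intros m HC d. induction d; simpl; intros Hd.
    - rewrite tsDn_rD, uDn_rD. apply le_refl.
    - rewrite tsDn_arr, uDn_arr. apply step_ge. auto.
    - rewrite tsDn_om; exact I.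
    - rewrite tsDn_meet. split.
      + eapply tsDn_mono; [|apply IHd1; lia]. intros; rewrite uDn_meet; apply joinT_l.
      + eapply tsDn_mono; [|apply IHd2; lia]. intros; rewrite uDn_meet; apply joinT_r. }
  induction n as [|n [IHC IHD]].
  - assert (HC : forall k, depthC k <= 0 -> tsC 0 (tC 0 k) k).
    { intros k Hk. rewrite tsC_0. apply depth0_triv; auto. }
    split; auto.
  - assert (HC : forall k, depthC k <= S n -> tsC (S n) (tC (S n) k) k).
    { intros k Hk. apply depth_proj in Hk. rewrite tC_S, tsC_S. cbn [fst snd].
      split; [apply IHD|apply IHC]; tauto. }
    split; auto.
Qed.

Lemma self_satC n k : depthC k <= n -> tsC n (tC n k) k. Proof. apply self_sat. Qed.
Lemma self_satD n d : depthD d <= n -> tsDn n (uDn n d) d. Proof. apply self_sat. Qed.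

Lemma trivD_uD d : trivD d -> forall n c, le (uDn n d c) bot.
Proof.
  induction d; simpl; intros H n c.
  - rewrite uDn_rD; auto.
  - rewrite uDn_arr. apply step_le; auto.
  - apply le_refl.
  - rewrite uDn_meet. destruct H. apply joinT_least; [apply IHd1|apply IHd2]; auto.
Qed.

Lemma T7D n d : depthD d <= n -> forall c, Cw (S n) c -> le (uDn (S n) d c) (uDn n d (p n c)).
Proof.
  induction d; simpl; intros Hd c Hc.
  - apply le_refl.
  - rewrite !uDn_arr. apply step_le. intro H. apply step_ge.
    apply below_C in H; auto.
    apply tsC_mono with (tC n t); [apply tC_wf|apply PW; auto| |apply self_satC; auto].
    eapply Cle_trans; [apply prj_tC|]. apply PM; auto. apply tC_wf.
  - apply le_refl.
  - rewrite !uDn_meet. apply joinT_mono; [apply IHd1|apply IHd2]; auto; lia.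
Qed.

Lemma T7C n k : depthC k <= n -> Cl (S n) (tC (S n) k) (e n (tC n k)).
Proof.
  revert k; induction n; intros k Hk.
  - rewrite tC_S, emb_0, Cle_S. cbn [fst snd]. split; [|exact I].
    intros c _. apply trivD_uD. apply trivC_proj, depth0_triv; auto.
  - apply depth_proj in Hk. rewrite (tC_S (S n)), emb_S, Cle_S. cbn [fst snd].
    rewrite tC_S. cbn [fst snd]. split.
    + intros c Hc. apply T7D; tauto.
    + apply IHn; tauto.
Qed.

Lemma T8D n d c : Cw (S n) c -> le (uDn n d (p n c)) (uDn (S n) d c).
Proof.
  intro Hc. induction d.
  - apply le_refl.
  - rewrite !uDn_arr. apply step_le. intro H. apply step_ge.
    apply tsC_mono with (e n (p n c)); [apply EW, PW; auto|auto|apply EP; auto|].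
    apply tsC_emb; auto. apply PW; auto.
  - apply le_refl.
  - rewrite !uDn_meet. apply joinT_mono; auto.
Qed.

Lemma T8C n k : Cl (S n) (e n (tC n k)) (tC (S n) k).
Proof.
  revert k; induction n; intros k.
  - rewrite emb_0, Cle_S. split; [intros; apply Hbot|exact I].
  - rewrite emb_S, (tC_S (S n)), Cle_S. cbn [fst snd]. rewrite tC_S. cbn [fst snd]. split.
    + intros c Hc. apply T8D; auto.
    + apply IHn.
Qed.

Scheme leD_mut := Induction for leD Sort Prop
with leC_mut := Induction for leC Sort Prop.
Combined Scheme le_mut from leD_mut, leC_mut.

Definition PDs (d1 d2 : tyD K) :=
  (trivD d1 -> trivD d2) /\ forall n,
  (forall c, Cw n c -> le (uDn n d2 c) (uDn n d1 c)) /\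
  (forall f, scott_cont le (Cl n) (Cw n) f -> tsDn n f d1 -> tsDn n f d2).
Definition PCs (k1 k2 : tyC K) :=
  (trivC k1 -> trivC k2) /\ forall n,
  Cl n (tC n k2) (tC n k1) /\ (forall c, Cw n c -> tsC n c k1 -> tsC n c k2).

Lemma sound_all : (forall d1 d2, leD le d1 d2 -> PDs d1 d2) /\
                  (forall k1 k2, leC le k1 k2 -> PCs k1 k2).
Proof.
  apply (le_mut _ le (fun d1 d2 _ => PDs d1 d2) (fun k1 k2 _ => PCs k1 k2));
  unfold PDs, PCs.
  - intros r1 r2 H. pose proof (leR_sound _ _ H) as Hs. split;
     [simpl; intro; eapply le_trans; eauto|].
     intro n; split; [intros c _; rewrite !uDn_rD; auto|].
     intros f _; rewrite !tsDn_rD; intro; eapply le_trans; eauto.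
  - intros s; split; [auto|]; intro n; split; [intros; apply le_refl|auto].
  - intros s t u _ [T1 H1] _ [T2 H2]; split; [auto|]; intro n.
     destruct (H1 n) as [A1 B1]; destruct (H2 n) as [A2 B2]; split;
     [intros; eapply le_trans; eauto|auto].
  - intros s t. split; [simpl; tauto|]. intro n. split.
    + intros; rewrite uDn_meet; apply joinT_l.
    + intros f _; rewrite tsDn_meet; tauto.
  - intros s t. split; [simpl; tauto|]. intro n. split.
    + intros; rewrite uDn_meet; apply joinT_r.
    + intros f _; rewrite tsDn_meet; tauto.
  - intros s. split; [simpl; auto|]. intro n. split.
    + intros; rewrite uDn_om; apply Hbot.
    + intros; rewrite tsDn_om; exact I.
  - intros r s t _ [T1 H1] _ [T2 H2]. split; [simpl; auto|]. intro n.
    destruct (H1 n) as [A1 B1]; destruct (H2 n) as [A2 B2]. split.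
    + intros; rewrite uDn_meet; apply joinT_least; auto.
    + intros; rewrite tsDn_meet; auto.
  - split; [simpl; intros; apply le_refl|]. intro n. split.
    + intros; rewrite uDn_arr, uDn_om; apply step_le; intros; apply le_refl.
    + intros; rewrite tsDn_arr; apply Hbot.
  - intros a. split; [simpl; auto|]. intro n. split.
    + intros; rewrite uDn_arr, uDn_rD. apply step_le; intros; apply le_refl.
    + intros f _. rewrite tsDn_arr, tsDn_rD. auto.
  - intros a. split; [simpl; auto|]. intro n. split.
    + intros; rewrite uDn_arr, uDn_rD. apply step_ge. apply tsC_om.
    + intros f _. rewrite tsDn_arr, tsDn_rD. auto.
  - intros k r1 r2. split; [simpl; intros [H1 H2]; apply joinT_least; auto|].
    intro n. split.
    + intros c _. rewrite uDn_meet, !uDn_arr. apply step_le. intro P. simpl.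
      apply joinT_mono; apply step_ge; auto.
    + intros f _. rewrite tsDn_meet, !tsDn_arr. simpl. intros [H1 H2].
      apply joinT_least; auto.
  - intros k1 k2 r1 r2 _ [Tk Hk] Hr. pose proof (leR_sound _ _ Hr) as Hs.
    split; [simpl; intro; eapply le_trans; eauto|]. intro n. destruct (Hk n) as [Ak Bk]. split.
    + intros c Hc. rewrite !uDn_arr. apply step_le. intro P.
      eapply le_trans; [exact Hs|]. apply step_ge; auto.
    + intros f Hf. rewrite !tsDn_arr. intro H.
      eapply le_trans; [exact Hs|]. eapply le_trans; [exact H|].
      apply (cont_mono _ _ _ _ _ Hf); auto; apply tC_wf.
  - intros s; split; [auto|]; intro n; split; [apply Cle_refl|auto].
  - intros s t u _ [T1 H1] _ [T2 H2]; split; [auto|]; intro n.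
     destruct (H1 n) as [A1 B1]; destruct (H2 n) as [A2 B2]; split;
     [eapply Cle_trans; eauto|auto].
  - intros s t. split; [simpl; tauto|]. intro n. split.
    + apply tC_meet_l.
    + intros c _; rewrite tsC_meet; tauto.
  - intros s t. split; [simpl; tauto|]. intro n. split.
    + apply tC_meet_r.
    + intros c _; rewrite tsC_meet; tauto.
  - intros s. split; [simpl; auto|]. intro n. split.
    + apply tC_om_least.
    + intros; apply tsC_om.
  - intros r s t _ [T1 H1] _ [T2 H2]. split; [simpl; auto|]. intro n.
    destruct (H1 n) as [A1 B1]; destruct (H2 n) as [A2 B2]. split.
    + apply tC_meet_least; auto.
    + intros; rewrite tsC_meet; auto.
  - split; [simpl; auto|]. intro n. destruct n.
    + split; [exact I|]. intros c _ _. rewrite tsC_0. simpl; auto.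
    + split; [apply Cle_refl|]. intros c _ H. exact H.
  - intros d1 d2 k1 k2. split; [simpl; tauto|]. intro n. destruct n.
    + split; [exact I|]. intros c _. rewrite !tsC_0. simpl; tauto.
    + split; [apply Cle_refl|]. intros c _ H. exact H.
  - intros d1 d2 k1 k2 _ [Td Hd] _ [Tk Hk]. split; [simpl; tauto|]. intro n.
    destruct n.
    + split; [exact I|]. intros c _. rewrite !tsC_0. simpl; tauto.
    + destruct (Hd n) as [Ad Bd]. destruct (Hk n) as [Ak Bk]. split.
      * rewrite !tC_S, Cle_S. cbn [fst snd]. split; auto.
      * intros c Hc. rewrite !tsC_S. cbn [projD projC]. rewrite Cwf_S in Hc.
        intros [H1 H2]. split; [apply Bd|apply Bk]; tauto.
Qed.

Lemma sound_D d1 d2 : leD le d1 d2 -> PDs d1 d2. Proof. apply sound_all. Qed.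
Lemma sound_C k1 k2 : leC le k1 k2 -> PCs k1 k2. Proof. apply sound_all. Qed.

Lemma syn_proj k : leC le k (prodC (projD k) (projC k)) /\ leC le (prodC (projD k) (projC k)) k.
Proof.
  induction k as [d k'|  |a [IHa1 IHa2] b [IHb1 IHb2]]; simpl.
  - split; apply leC_refl.
  - split; [apply leC_om_prod|apply leC_top].
  - split.
    + eapply leC_trans; [|apply leC_prod_meet].
      apply leC_glb; [eapply leC_trans; [apply leC_meet_l|exact IHa1]
                     |eapply leC_trans; [apply leC_meet_r|exact IHb1]].
    + apply leC_glb.
      * eapply leC_trans; [|exact IHa2]. apply leC_prod; [apply leD_meet_l|apply leC_meet_l].
      * eapply leC_trans; [|exact IHb2]. apply leC_prod; [apply leD_meet_r|apply leC_meet_r].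
Qed.

Lemma syn_rarr r : leD le (rD r) (arrD omC r) /\ leD le (arrD omC r) (rD r).
Proof.
  destruct (R1 r) as [H1 H2]. split.
  - eapply leD_trans; [apply leD_R; exact H1|].
    eapply leD_trans; [apply leD_psi_arr|]. apply leD_arr; [apply leC_refl|exact H2].
  - eapply leD_trans; [|apply leD_R; exact H2].
    eapply leD_trans; [|apply leD_arr_psi]. apply leD_arr; [apply leC_refl|exact H1].
Qed.

Lemma triv_arr k r : le (topR r) bot -> leD le omD (arrD k r).
Proof.
  intro H. eapply leD_trans; [apply leD_om_arr|]. apply leD_arr; [apply leC_top|].
  apply leR_complete. exact H.
Qed.

Lemma trivD_om d : trivD d -> leD le omD d.
Proof.
  induction d; simpl; intro H.
  - eapply leD_trans; [apply triv_arr; exact H|apply syn_rarr].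
  - apply triv_arr; auto.
  - apply leD_refl.
  - apply leD_glb; tauto.
Qed.

Lemma trivC_om k : trivC k -> leC le omC k.
Proof.
  induction k; simpl; intro H.
  - eapply leC_trans; [apply leC_om_prod|]. apply leC_prod; [apply trivD_om|]; tauto.
  - apply leC_refl.
  - apply leC_glb; tauto.
Qed.

Lemma uD_compact n d c : compact le (uDn n d c).
Proof.
  induction d.
  - apply topR_compact.
  - rewrite uDn_arr. apply step_compact, topR_compact.
  - apply bot_compact.
  - rewrite uDn_meet. apply join_compact; auto.
Qed.

Lemma claim n : (forall k' k, tsC n (tC n k') k -> leC le k' k) ->
  forall d' k r, le (topR r) (uDn n d' (tC n k)) -> leD le d' (arrD k r).
Proof.
  intros HC d'. induction d' as [r1|k1 r1| |a IHa b IHb]; intros k r H.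
  - rewrite uDn_rD in H. eapply leD_trans; [apply syn_rarr|].
    apply leD_arr; [apply leC_top|apply leR_complete; auto].
  - rewrite uDn_arr in H. destruct (classic (tsC n (tC n k) k1)) as [Hk|Hk].
    + apply leD_arr; [apply HC; auto|]. apply leR_complete.
      eapply le_trans; [exact H|]. apply step_le; intros; apply le_refl.
    + eapply leD_trans; [apply leD_top|]. apply triv_arr.
      eapply le_trans; [exact H|]. apply step_le; tauto.
  - eapply leD_trans; [apply leD_top|]. apply triv_arr. auto.
  - rewrite uDn_meet in H.
    set (ka := exist _ (uDn n a (tC n k)) (uD_compact n a (tC n k)) : K).
    set (kb := exist _ (uDn n b (tC n k)) (uD_compact n b (tC n k)) : K).
    assert (Ha : leD le a (arrD k (psiR ka))) by (apply IHa; apply le_refl).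
    assert (Hb : leD le b (arrD k (psiR kb))) by (apply IHb; apply le_refl).
    eapply leD_trans; [|apply leD_arr; [apply leC_refl|
          apply leR_complete with (s := r) (r := meetR (psiR ka) (psiR kb)); exact H]].
    eapply leD_trans; [|apply leD_arr_meet].
    apply leD_glb; [eapply leD_trans; [apply leD_meet_l|exact Ha]
                   |eapply leD_trans; [apply leD_meet_r|exact Hb]].
Qed.

Lemma complete_all n :
  (forall k' k, tsC n (tC n k') k -> leC le k' k) /\
  (forall d' d, tsDn n (uDn n d') d -> leD le d' d).
Proof.
  assert (HD : forall n, (forall k' k, tsC n (tC n k') k -> leC le k' k) ->
     forall d' d, tsDn n (uDn n d') d -> leD le d' d).
  { intros m HC d' d. induction d; intro H.
    - rewrite tsDn_rD in H. eapply leD_trans; [|apply syn_rarr]. apply (claim m); auto.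
    - rewrite tsDn_arr in H. apply (claim m); auto.
    - apply leD_top.
    - rewrite tsDn_meet in H. apply leD_glb; tauto. }
  induction n as [|n [IHC IHD]].
  - assert (HC : forall k' k, tsC 0 (tC 0 k') k -> leC le k' k).
    { intros k' k H. rewrite tsC_0 in H. eapply leC_trans; [apply leC_top|].
      apply trivC_om; auto. }
    split; [exact HC|apply HD; exact HC].
  - assert (HC : forall k' k, tsC (S n) (tC (S n) k') k -> leC le k' k).
    { intros k' k H. rewrite tC_S, tsC_S in H. cbn [fst snd] in H. destruct H as [H1 H2].
      eapply leC_trans; [apply syn_proj|]. eapply leC_trans; [|apply syn_proj].
      apply leC_prod; auto. }
    split; [exact HC|apply HD; exact HC].
Qed.

Lemma completeC n k' k : tsC n (tC n k') k -> leC le k' k. Proof. apply complete_all. Qed.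
Lemma claimN n d' k r : le (topR r) (uDn n d' (tC n k)) -> leD le d' (arrD k r).
Proof. apply claim. apply complete_all. Qed.

Definition Aset n (c : CR n) (s : CR n) : Prop :=
  exists k, depthC k <= n /\ s = tC n k /\ Cl n (tC n k) c.

Lemma Aset_dir n c : directed (Cl n) (Aset n c).
Proof.
  split.
  - exists (tC n omC), omC. split; [simpl; lia|split; auto]. apply tC_om_least.
  - intros x y [k1 [D1 [-> H1]]] [k2 [D2 [-> H2]]]. exists (tC n (meetC k1 k2)). split.
    + exists (meetC k1 k2). split; [simpl; lia|split; auto]. apply tC_meet_least; auto.
    + split; [apply tC_meet_l|apply tC_meet_r].
Qed.

Lemma Aset_wf n c s : Aset n c s -> Cw n s.
Proof. intros [k [_ [-> _]]]. apply tC_wf. Qed.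

Lemma ALG n c : Cw n c -> is_lub_in (Cw n) (Cl n) (Aset n c) c.
Proof.
  revert c; induction n as [|n IH]; intros c Hc.
  - split; [exact I|split]; [intros s _; exact I|intros; exact I].
  - split; [auto|split].
    + intros s [k [_ [-> H]]]; auto.
    + intros z Hz Hub. pose proof Hc as Hc'. rewrite Cwf_S in Hc'. destruct Hc' as [Hf Hc0].
      pose proof Hz as Hz'. rewrite Cwf_S in Hz'. destruct Hz' as [Hzf Hz0].
      rewrite Cle_S. split.
      * intros c1 Hc1. apply (proj2 (alg _)). intros a [Ha Hac].
        pose proof (proj2 Hf (Aset n c1) (Aset_wf n c1) (Aset_dir n c1) c1 (IH c1 Hc1)) as Hl.
        assert (Hd : directed le (fun r => exists s, Aset n c1 s /\ r = fst c s)).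
        { apply (image_directed (Cl n) (Cw n)); [|apply Aset_wf|apply Aset_dir].
          intros; apply (cont_mono _ _ _ _ _ Hf); auto. }
        destruct (Ha _ Hd _ Hl Hac) as [y [[s [[k1 [Dk1 [-> Hk1]]] ->]] Hay]].
        set (ka := exist _ a Ha : K).
        assert (Hin : Cl (S n) (tC (S n) (prodC (arrD k1 (psiR ka)) omC)) c).
        { rewrite tC_S, Cle_S. cbn [fst snd projD projC]. split; [|apply tC_om_least].
          intros c2 Hc2. rewrite uDn_arr. apply step_le. intro Hts. simpl.
          eapply le_trans; [exact Hay|]. apply (cont_mono _ _ _ _ _ Hf); auto.
          apply tC_wf. apply below_C; auto. }
        assert (HA : Aset (S n) c (tC (S n) (prodC (arrD k1 (psiR ka)) omC))).
        { exists (prodC (arrD k1 (psiR ka)) omC). split; [simpl; lia|split; [reflexivity|exact Hin]]. }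
        pose proof (Hub _ HA) as Hle.
        rewrite tC_S, Cle_S in Hle. destruct Hle as [Hle _]. cbn [fst projD] in Hle.
        eapply le_trans; [|apply Hle; auto]. rewrite uDn_arr. apply step_ge.
        apply tsC_mono with (tC n k1); auto. apply tC_wf. apply self_satC; auto.
      * apply (proj2 (proj2 (IH _ Hc0))); auto.
        intros s [k0 [Dk0 [-> Hk0]]].
        assert (Hin : Cl (S n) (tC (S n) (prodC omD k0)) c).
        { rewrite tC_S, Cle_S. cbn [fst snd projD projC].
          split; [intros; rewrite uDn_om; apply Hbot|exact Hk0]. }
        assert (HA : Aset (S n) c (tC (S n) (prodC omD k0))).
        { exists (prodC omD k0). split; [simpl; lia|split; [reflexivity|exact Hin]]. }
        pose proof (Hub _ HA) as Hle.
        rewrite tC_S, Cle_S in Hle. apply Hle.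
Qed.

Lemma all_levels (P : nat -> Prop) n : (forall m, n <= m -> P m) ->
  (forall m, P (S m) -> P m) -> forall m, P m.
Proof.
  intros Hup Hdown m.
  assert (H : forall j m, m + j = n -> P m).
  { induction j; intros m' Hm'.
    - apply Hup; lia.
    - apply Hdown. apply IHj. lia. }
  destruct (Nat.le_gt_cases n m) as [Hnm|Hnm]; [apply Hup; auto|].
  apply (H (n - m)); lia.
Qed.

Definition satDl (x : Dlim le bot) (d : tyD K) : Prop :=
  forall n c, Cw n c -> le (uDn n d c) (proj1_sig x n c).

Lemma satDl_filter x : is_filter (leD le) omD meetD (satDl x).
Proof.
  unfold is_filter, satDl. split; [|split].
  - intros n c _. rewrite uDn_om. apply Hbot.
  - intros s t H Hst n c Hc. eapply le_trans; [|apply H; auto].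
    apply (proj1 (proj2 (sound_D _ _ Hst) n)); auto.
  - intros s t H1 H2 n c Hc. rewrite uDn_meet. apply joinT_least; auto.
Qed.

Lemma D_iso : order_iso (@filter_incl _ _ : filterD le -> filterD le -> Prop) (@Dlim_le T le bot).
Proof.
  apply (abstract_iso _ _ _ _ satDl).
  - apply satDl_filter.
  - intros x y. split.
    + intros H d Hd n c Hc. eapply le_trans; [apply Hd; auto|apply H; auto].
    + intros H n c Hc. destruct x as [x Hx]. destruct y as [y Hy]. simpl in *.
      apply (proj2 (alg _)). intros a [Ha Hac].
      destruct (Hx n) as [Hxc Hxe].
      pose proof (proj2 Hxc (Aset n c) (Aset_wf n c) (Aset_dir n c) c (ALG n c Hc)) as Hl.
      assert (Hd : directed le (fun r => exists s, Aset n c s /\ r = x n s)).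
      { apply (image_directed (Cl n) (Cw n)); [|apply Aset_wf|apply Aset_dir].
        intros; apply (cont_mono _ _ _ _ _ Hxc); auto. }
      destruct (Ha _ Hd _ Hl Hac) as [yy [[s [[k1 [Dk1 [-> Hk1]]] ->]] Hay]].
      set (ka := exist _ a Ha : K).
      assert (Hsat : satDl (exist _ x Hx) (arrD k1 (psiR ka))).
      { unfold satDl. simpl.
        assert (HQ : forall m, n <= m -> le a (x m (tC m k1))).
        { intros m Hm. induction Hm; auto.
          eapply le_trans; [exact IHHm|]. destruct (Hx m) as [Hxm Hxme].
          rewrite Hxme by apply tC_wf. destruct (Hx (S m)) as [HxS _].
          apply (cont_mono _ _ _ _ _ HxS); [apply EW, tC_wf|apply tC_wf|apply T8C]. }
        assert (HP : forall m c', Cw m c' -> tsC m c' k1 -> le a (x m c')).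
        { apply (all_levels (fun m => forall c', Cw m c' -> tsC m c' k1 -> le a (x m c')) n).
          - intros m Hm c' Hc' Ht. apply le_trans with (x m (tC m k1)); [apply HQ; auto|].
            destruct (Hx m) as [Hxm _]. apply (cont_mono _ _ _ _ _ Hxm); auto.
            apply tC_wf. apply below_C; auto.
          - intros m HPS c' Hc' Ht. destruct (Hx m) as [_ Hxme]. rewrite Hxme by auto.
            apply HPS; [apply EW; auto|]. apply tsC_emb; auto. }
        intros m c' Hc'. rewrite uDn_arr. apply step_le. intro Ht. apply HP; auto. }
      specialize (H _ Hsat n c Hc). simpl in H.
      eapply le_trans; [|exact H]. rewrite uDn_arr. apply (step_ge a).
      apply tsC_mono with (tC n k1); auto. apply tC_wf. apply self_satC; auto.
  - intros F HF. pose proof HF as HF'. unfold is_filter in HF'. destruct HF' as [Fom [Fup Fmt]].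
    set (xf := fun n (c : CR n) => supT (fun y => exists d, F d /\ y = uDn n d c)).
    assert (Hxf : forall n, Dwf le n (xf n) /\ forall c, Cw n c -> xf n c = xf (S n) (e n c)).
    { intro n. split.
      - unfold Dwf.
        assert (Heq : xf n = (fun c => supT (fun y => exists f, (exists d, F d /\ f = uDn n d) /\ y = f c))).
        { apply functional_extensionality. intro c. unfold xf. apply supT_ext. intro y. split.
          - intros [d [Fd ->]]. eauto.
          - intros [f [[d [Fd ->]] ->]]. eauto. }
        rewrite Heq. apply sup_cont. intros f [d [_ ->]]. apply uDn_wf.
      - intros c Hc. unfold xf. apply supT_ext. intro y.
        split; intros [d [Fd ->]]; exists d; split; auto; rewrite uDn_emb; auto. }
    exists (exist _ xf Hxf).
    assert (Hup : forall s t, satDl (exist _ xf Hxf) s -> leD le s t -> satDl (exist _ xf Hxf) t).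
    { apply satDl_filter. }
    assert (Harr : forall k r, satDl (exist _ xf Hxf) (arrD k r) -> F (arrD k r)).
    { intros k r H. unfold satDl in H. simpl in H.
      set (n := depthC k). specialize (H n (tC n k) (tC_wf n k)).
      rewrite uDn_arr in H. unfold xf in H.
      assert (Ht : le (topR r) (supT (fun y => exists d, F d /\ y = uDn n d (tC n k)))).
      { eapply le_trans; [|exact H]. apply step_ge. apply self_satC. unfold n; lia. }
      assert (Hd : directed le (fun y => exists d, F d /\ y = uDn n d (tC n k))).
      { split; [exists bot, omD; auto|].
        intros y1 y2 [d1 [F1 ->]] [d2 [F2 ->]]. exists (uDn n (meetD d1 d2) (tC n k)).
        split; [exists (meetD d1 d2); auto|]. rewrite uDn_meet.
        split; [apply joinT_l|apply joinT_r]. }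
      destruct (compact_sup _ _ (topR_compact r) Hd Ht) as [y [[d' [Fd' ->]] Hle]].
      eapply Fup; [exact Fd'|]. apply claimN with n. exact Hle. }
    intro d. split.
    + induction d as [r|k r| |a IHa b IHb]; intro H.
      * eapply Fup; [|apply syn_rarr]. apply Harr. eapply Hup; [exact H|apply syn_rarr].
      * apply Harr; auto.
      * exact Fom.
      * apply Fmt; [apply IHa|apply IHb]; eapply Hup; eauto;
          [apply leD_meet_l|apply leD_meet_r].
    + intros Fd n c Hc. simpl. unfold xf. apply supT_ub. eauto.
Qed.

Definition satCl (x : Clim le bot) (k : tyC K) : Prop :=
  forall n, Cl n (tC n k) (proj1_sig x n).

Lemma satCl_filter x : is_filter (leC le) omC meetC (satCl x).
Proof.
  unfold is_filter, satCl. split; [|split].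
  - intros n. apply tC_om_least.
  - intros s t H Hst n. eapply Cle_trans; [|apply H].
    apply (proj1 (proj2 (sound_C _ _ Hst) n)).
  - intros s t H1 H2 n. apply tC_meet_least; auto.
Qed.

Lemma C_iso : order_iso (@filter_incl _ _ : filterC le -> filterC le -> Prop) (@Clim_le T le bot).
Proof.
  apply (abstract_iso _ _ _ _ satCl).
  - apply satCl_filter.
  - intros x y. split.
    + intros H k Hk n. eapply Cle_trans; [apply Hk|apply H].
    + intros H n. destruct x as [x Hx]. destruct y as [y Hy]. unfold Clim_le. simpl in *.
      destruct (Hx n) as [Wx _]. destruct (Hy n) as [Wy _].
      apply (proj2 (proj2 (ALG n (x n) Wx))); auto.
      intros s [k [Dk [-> Hk]]].
      assert (Hsat : satCl (exist _ x Hx) k).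
      { unfold satCl. simpl. apply (all_levels (fun m => Cl m (tC m k) (x m)) n).
        - intros m Hm. induction Hm; auto.
          destruct (Hx m) as [Wm [H1 H2]]. destruct (Hx (S m)) as [WS _].
          apply Cle_trans with (e m (tC m k)); [apply T7C; lia|].
          apply Cle_trans with (e m (x m)); [apply EM; [apply tC_wf|exact Wm|exact IHHm]|].
          apply Cle_trans with (e m (p m (x (S m)))); [apply EM; [exact Wm|apply PW; auto|exact H1]|].
          apply EP; auto.
        - intros m HS. destruct (Hx m) as [Wm [H1 H2]]. destruct (Hx (S m)) as [WS _].
          eapply Cle_trans; [apply prj_tC|].
          eapply Cle_trans; [apply PM; [apply tC_wf|exact WS|exact HS]|exact H2]. }
      apply (H _ Hsat n).
  - intros F HF. pose proof HF as HF'. unfold is_filter in HF'. destruct HF' as [Fom [Fup Fmt]].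
    set (Sn := fun n (s : CR n) => exists k, F k /\ s = tC n k).
    assert (HSw : forall n s, Sn n s -> Cw n s) by (intros n s [k [_ ->]]; apply tC_wf).
    set (xf := fun n => supC n (Sn n)).
    assert (Hxf : forall n, Cw n (xf n) /\ Cl n (xf n) (p n (xf (S n))) /\ Cl n (p n (xf (S n))) (xf n)).
    { intro n. split; [|split].
      - apply supC_wf; auto.
      - apply supC_least. intros s [k [Fk ->]].
        eapply Cle_trans; [apply prj_tC|]. apply PM; [apply tC_wf|apply supC_wf; auto|].
        apply supC_ub. exists k; auto.
      - eapply Cle_trans; [apply PC; auto|]. apply supC_mono.
        intros r [s [[k [Fk ->]] ->]]. exists (tC n k). split; [exists k; auto|apply prj_tC]. }
    exists (exist _ xf Hxf). intro k. split.
    + intro H. unfold satCl in H. simpl in H. set (n := depthC k). specialize (H n).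
      assert (Ht : tsC n (xf n) k).
      { apply tsC_mono with (tC n k); auto. apply tC_wf. apply supC_wf; auto.
        apply self_satC. unfold n; lia. }
      assert (Hd : directed (Cl n) (Sn n)).
      { split; [exists (tC n omC), omC; auto|].
        intros s1 s2 [k1 [F1 ->]] [k2 [F2 ->]]. exists (tC n (meetC k1 k2)).
        split; [exists (meetC k1 k2); auto|]. split; [apply tC_meet_l|apply tC_meet_r]. }
      destruct (tsC_open n (Sn n) (HSw n) Hd k Ht) as [s [[k' [Fk' ->]] Hs]].
      eapply Fup; [exact Fk'|]. apply completeC with n. exact Hs.
    + intros Fk n. simpl. apply supC_ub. exists k; auto.
Qed.

End Main.

Theorem theorem3p21 (T : Type) (le : T -> T -> Prop) (bot : T)
  (HR : omega_algebraic_lattice le) (Hbot : forall x, le bot x) :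
  order_iso (@filter_incl _ _ : filterR le -> filterR le -> Prop) le /\
  order_iso (@filter_incl _ _ : filterD le -> filterD le -> Prop) (@Dlim_le T le bot) /\
  order_iso (@filter_incl _ _ : filterC le -> filterC le -> Prop) (@Clim_le T le bot).
Proof.
  split; [exact (R_iso T le bot HR Hbot)|split; [apply D_iso; auto|apply C_iso; auto]].
Qed.
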